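(* Let $a,b>0$, $D=[0,a]\times[0,b]$, and let $f:D\to\mathbb{R}$ be a $C^3$ function. Let $p\in\operatorname{int}D$ be a local minimum of $f$ at which the Hessian of $f$ is positive definite. Then there exist a neighborhood $U$ of $p$ and a number $r>0$ such that for every sufficiently large $n$ for which $D_n$ is nondegenerate, there is exactly one grid vertex $p_{i,j}$ of $D_n$ in $U$ which is minimal within its grid circle $C_r(p_{i,j})$.
   Context: For $n\ge1$, $D_n$ denotes the division of $D$ into $n\times n$ congruent rectangles; its grid vertices are the points $p_{i,j}=\left(\frac{i}{n}a,\frac{j}{n}b\right)$, $0\le i,j\le n$. $D_n$ is called nondegenerate if $f(p)\neq f(p')$ for any two distinct grid vertices $p\neq p'$ of $D_n$. The grid circle of centre $p_{i,j}$ and radius $r$ is $C_r(p_{i,j})=\{p_{l,m}: 0\le l,m\le n,\ \max\{|l-i|,|m-j|\}\le r\}$. A grid vertex $p_{i,j}$ is minimal (resp. maximal) within $C_r(p_{i,j})$ if $f(p_{i,j})\le f(q)$ (resp. $f(p_{i,j})\ge f(q)$) for every $q\in C_r(p_{i,j})$. *)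

(* Defs.v *)
From Stdlib Require Import Reals List.
Import ListNotations.
Open Scope R_scope.

Definition inD (a b x y : R) : Prop := 0 <= x <= a /\ 0 <= y <= b.
Definition inIntD (a b x y : R) : Prop := 0 < x < a /\ 0 < y < b.

(* Partial derivative directions: false = d/dx, true = d/dy. *)
Definition has_partial (d : bool) (g h : R -> R -> R) (x y : R) : Prop :=
  if d then derivable_pt_lim (fun t => g x t) y (h x y)
  else derivable_pt_lim (fun t => g t y) x (h x y).

Definition cont_on_D (a b : R) (g : R -> R -> R) : Prop :=
  forall x y, inD a b x y -> forall eps, 0 < eps -> exists delta, 0 < delta /\
    forall x' y', inD a b x' y' -> Rabs (x' - x) < delta -> Rabs (y' - y) < delta ->
      Rabs (g x' y' - g x y) < eps.

(* F l is the iterated partial derivative of f along the word l, with the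
   head of l being the LAST derivative taken: F (d :: l) = d/d(d) (F l).
   f is C^3 on the closed rectangle D: all partial derivatives of order <= 3
   exist on int D and each extends continuously to D (f itself being
   continuous on D). *)
Definition C3_on_D_with (a b : R) (f : R -> R -> R) (F : list bool -> R -> R -> R) : Prop :=
  F [] = f /\
  cont_on_D a b f /\
  (forall l d, (length l < 3)%nat ->
     forall x y, inIntD a b x y -> has_partial d (F l) (F (d :: l)) x y) /\
  (forall l, (length l <= 3)%nat ->
     exists G, cont_on_D a b G /\ forall x y, inIntD a b x y -> G x y = F l x y).

Definition hessian_pos_def (F : list bool -> R -> R -> R) (x y : R) : Prop :=
  forall u v, (u, v) <> (0, 0) ->
    0 < u * u * F [false; false] x y + u * v * F [true; false] x y
        + v * u * F [false; true] x y + v * v * F [true; true] x y.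

Definition local_min_on_D (a b : R) (f : R -> R -> R) (x y : R) : Prop :=
  exists delta, 0 < delta /\ forall x' y', inD a b x' y' ->
    Rabs (x' - x) < delta -> Rabs (y' - y) < delta -> f x y <= f x' y'.

Definition gx (a : R) (n i : nat) : R := INR i / INR n * a.
Definition gy (b : R) (n j : nat) : R := INR j / INR n * b.

Definition nondegenerate (a b : R) (f : R -> R -> R) (n : nat) : Prop :=
  forall i j l m, (i <= n)%nat -> (j <= n)%nat -> (l <= n)%nat -> (m <= n)%nat ->
    (i, j) <> (l, m) -> f (gx a n i) (gy b n j) <> f (gx a n l) (gy b n m).

Definition in_grid_circle (n : nat) (r : R) (i j l m : nat) : Prop :=
  (l <= n)%nat /\ (m <= n)%nat /\
  Rmax (Rabs (INR l - INR i)) (Rabs (INR m - INR j)) <= r.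

Definition minimal_in_circle (a b : R) (f : R -> R -> R) (n : nat) (r : R) (i j : nat) : Prop :=
  forall l m, in_grid_circle n r i j l m ->
    f (gx a n i) (gy b n j) <= f (gx a n l) (gy b n m).

Definition is_nbhd (U : R -> R -> Prop) (x y : R) : Prop :=
  exists eps, 0 < eps /\ forall x' y', Rabs (x' - x) < eps -> Rabs (y' - y) < eps -> U x' y'.

(* Main.v *)
Require Import Defs.
From Stdlib Require Import Reals List Lra Lia Psatz Classical ZArith.
From Coquelicot Require Import Coquelicot.
Import ListNotations.
Open Scope R_scope.


Lemma dmulc (f : R -> R) x l c :
  derivable_pt_lim f x l -> derivable_pt_lim (fun t => f t * c) x (l * c).
Proof.
  intros H. 
  replace (l * c) with (l * (fct_cte c) x + f x * 0) by (unfold fct_cte; ring).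
  apply (derivable_pt_lim_mult f (fct_cte c)); auto. apply derivable_pt_lim_const.
Qed.

Lemma dplus (f g : R -> R) x l1 l2 :
  derivable_pt_lim f x l1 -> derivable_pt_lim g x l2 ->
  derivable_pt_lim (fun t => f t + g t) x (l1 + l2).
Proof. intros. apply (derivable_pt_lim_plus f g); auto. Qed.

Lemma dl_eq f x l l' : l = l' -> derivable_pt_lim f x l -> derivable_pt_lim f x l'.
Proof. intros ->; auto. Qed.

Lemma dlin_loc x0 u t : derivable_pt_lim (fun s => x0 + s * u) t u.
Proof.
  apply (dl_eq _ _ (0 + 1 * u)); [ring|].
  apply (dplus (fun _ => x0) (fun s => s * u)).
  apply (derivable_pt_lim_const x0).
  apply dmulc. apply derivable_pt_lim_id.
Qed.

Lemma mono_deriv (h h' : R -> R) a b :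
  a <= b -> (forall t, a <= t <= b -> derivable_pt_lim h t (h' t)) ->
  (forall t, a <= t <= b -> 0 <= h' t) -> h a <= h b.
Proof.
  intros Hab Hd Hp. destruct (Req_dec a b) as [->|Hne]; [lra|].
  destruct (MVT_cor2 h h' a b) as [c [Hc1 Hc2]]; [lra|auto|].
  assert (0 <= h' c) by (apply Hp; lra). nra.
Qed.

Lemma dcmul (f : R -> R) x l c :
  derivable_pt_lim f x l -> derivable_pt_lim (fun t => c * f t) x (c * l).
Proof.
  intros H. apply (dl_eq _ _ (0 * f x + fct_cte c x * l)); [unfold fct_cte; ring|].
  apply (derivable_pt_lim_mult (fct_cte c) f); auto. apply derivable_pt_lim_const.
Qed.

Lemma dminus (f g : R -> R) x l1 l2 :
  derivable_pt_lim f x l1 -> derivable_pt_lim g x l2 ->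
  derivable_pt_lim (fun t => f t - g t) x (l1 - l2).
Proof. intros. apply (derivable_pt_lim_minus f g); auto. Qed.

Lemma dsq x : derivable_pt_lim (fun t => t * t) x (2 * x).
Proof.
  apply (dl_eq _ _ (1 * id x + id x * 1)); [unfold id; ring|].
  apply (derivable_pt_lim_mult id id); apply derivable_pt_lim_id.
Qed.

Lemma taylor_low (g g1 g2 : R -> R) c s :
  0 <= s <= 1 ->
  (forall t, 0 <= t <= 1 -> derivable_pt_lim g t (g1 t)) ->
  (forall t, 0 <= t <= 1 -> derivable_pt_lim g1 t (g2 t)) ->
  (forall t, 0 <= t <= 1 -> c <= g2 t) ->
  g 0 + g1 0 * s + c / 2 * (s * s) <= g s.
Proof.
  intros Hs Hg Hg1 Hc.
  assert (K : forall t, 0 <= t <= 1 -> g1 0 + c * t <= g1 t).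
  { intros t Ht.
    assert (E := mono_deriv (fun x => g1 x - c * x) (fun x => g2 x - c) 0 t).
    assert (g1 0 - c * 0 <= g1 t - c * t); [|lra].
    apply E; [lra| |].
    - intros x Hx. apply (dl_eq _ _ (g2 x - c * 1)); [ring|].
      apply (dminus g1 (fun x => c * x)). apply Hg1; lra.
      apply (dcmul (fun x => x)). apply derivable_pt_lim_id.
    - intros x Hx. assert (c <= g2 x) by (apply Hc; lra). lra. }
  assert (E := mono_deriv (fun x => g x - g1 0 * x - c / 2 * (x * x))
                 (fun x => g1 x - g1 0 - c * x) 0 s).
  assert (g 0 - g1 0 * 0 - c / 2 * (0 * 0) <= g s - g1 0 * s - c / 2 * (s * s)); [|lra].
  apply E; [lra| |].
  - intros x Hx.
    apply (dl_eq _ _ (g1 x - g1 0 * 1 - (c/2) * (2 * x))); [field|].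
    apply (dminus (fun x => g x - g1 0 * x) (fun x => c / 2 * (x * x))).
    apply (dminus g (fun x => g1 0 * x)). apply Hg; lra.
    apply (dcmul (fun x => x)). apply derivable_pt_lim_id.
    apply (dcmul (fun x => x * x)). apply dsq.
  - intros x Hx. assert (g1 0 + c * x <= g1 x) by (apply K; lra). lra.
Qed.
Lemma taylor_up (g g1 g2 : R -> R) c s :
  0 <= s <= 1 ->
  (forall t, 0 <= t <= 1 -> derivable_pt_lim g t (g1 t)) ->
  (forall t, 0 <= t <= 1 -> derivable_pt_lim g1 t (g2 t)) ->
  (forall t, 0 <= t <= 1 -> g2 t <= c) ->
  g s <= g 0 + g1 0 * s + c / 2 * (s * s).
Proof.
  intros Hs Hg Hg1 Hc.
  assert (E := taylor_low (fun t => - g t) (fun t => - g1 t) (fun t => - g2 t) (-c) s Hs).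
  assert (- g 0 + - g1 0 * s + - c / 2 * (s * s) <= - g s); [|lra].
  apply E.
  - intros t Ht. apply (derivable_pt_lim_opp g). auto.
  - intros t Ht. apply (derivable_pt_lim_opp g1). auto.
  - intros t Ht. assert (g2 t <= c) by auto. lra.
Qed.

Lemma diff_partials (h hx hy : R -> R -> R) x y rho : 0 < rho ->
  (forall u v, Rabs (u - x) < rho -> Rabs (v - y) < rho ->
     derivable_pt_lim (fun t => h t v) u (hx u v) /\
     derivable_pt_lim (fun t => h u t) v (hy u v)) ->
  continuity_2d_pt hx x y -> continuity_2d_pt hy x y ->
  differentiable_pt_lim h x y (hx x y) (hy x y).
Proof.
  intros Hr Hd Cx Cy eps.
  assert (He2 : 0 < eps / 2) by (destruct eps; simpl; lra).
  destruct (Cx (mkposreal _ He2)) as [d1 Hd1].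
  destruct (Cy (mkposreal _ He2)) as [d2 Hd2].
  assert (Hdm : 0 < Rmin rho (Rmin d1 d2)).
  { destruct d1, d2; simpl. repeat apply Rmin_pos; auto. }
  exists (mkposreal _ Hdm). simpl. intros u v Hu Hv.
  assert (Hu1 : Rabs (u - x) < rho) by (eapply Rlt_le_trans; [apply Hu| apply Rmin_l]).
  assert (Hv1 : Rabs (v - y) < rho) by (eapply Rlt_le_trans; [apply Hv| apply Rmin_l]).
  assert (Hu2 : Rabs (u - x) < d1).
  { eapply Rlt_le_trans; [apply Hu|]. eapply Rle_trans; [apply Rmin_r|apply Rmin_l]. }
  assert (Hv3 : Rabs (v - y) < d2).
  { eapply Rlt_le_trans; [apply Hv|]. eapply Rle_trans; [apply Rmin_r|apply Rmin_r]. }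
  assert (Hu3 : Rabs (u - x) < d2).
  { eapply Rlt_le_trans; [apply Hu|]. eapply Rle_trans; [apply Rmin_r|apply Rmin_r]. }
  destruct (MVT_cor4 (fun t => h t y) (fun t => hx t y) x (Rabs (u - x))) with (b := u)
    as [xi [Exi Hxi]]; [|lra|].
  { intros c Hc. apply is_derive_Reals. apply Hd; [lra|]. rewrite Rminus_diag, Rabs_R0. lra. }
  destruct (MVT_cor4 (fun t => h u t) (fun t => hy u t) y (Rabs (v - y))) with (b := v)
    as [eta [Eeta Heta]]; [|lra|].
  { intros c Hc. apply is_derive_Reals. apply Hd; lra. }
  simpl in Exi, Eeta.
  assert (A1 : Rabs (hx xi y - hx x y) < eps / 2).
  { apply (Hd1 xi y); [lra|]. rewrite Rminus_diag, Rabs_R0. destruct d1; simpl; lra. }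
  assert (A2 : Rabs (hy u eta - hy x y) < eps / 2).
  { apply (Hd2 u eta); lra. }
  replace (h u v - h x y - (hx x y * (u - x) + hy x y * (v - y))) with
    ((hx xi y - hx x y) * (u - x) + (hy u eta - hy x y) * (v - y)) by lra.
  eapply Rle_trans; [apply Rabs_triang|]. rewrite !Rabs_mult.
  assert (M1 : Rabs (u - x) <= Rmax (Rabs (u - x)) (Rabs (v - y))) by apply Rmax_l.
  assert (M2 : Rabs (v - y) <= Rmax (Rabs (u - x)) (Rabs (v - y))) by apply Rmax_r.
  assert (0 <= Rabs (u - x)) by apply Rabs_pos.
  assert (0 <= Rabs (v - y)) by apply Rabs_pos.
  nra.
Qed.
Lemma int_open a b x y : inIntD a b x y ->
  exists rho, 0 < rho /\ forall u v, Rabs (u - x) < rho -> Rabs (v - y) < rho -> inIntD a b u v.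
Proof.
  intros [[H1 H2] [H3 H4]].
  exists (Rmin (Rmin x (a - x)) (Rmin y (b - y))). split.
  - repeat apply Rmin_pos; lra.
  - intros u v Hu Hv.
    assert (R1 := Rmin_l (Rmin x (a - x)) (Rmin y (b - y))).
    assert (R2 := Rmin_r (Rmin x (a - x)) (Rmin y (b - y))).
    assert (R3 := Rmin_l x (a - x)). assert (R4 := Rmin_r x (a - x)).
    assert (R5 := Rmin_l y (b - y)). assert (R6 := Rmin_r y (b - y)).
    apply Rabs_def2 in Hu. apply Rabs_def2 in Hv.
    unfold inIntD. lra.
Qed.

Lemma contF a b f F : C3_on_D_with a b f F ->
  forall l, (length l <= 3)%nat -> forall x y, inIntD a b x y -> continuity_2d_pt (F l) x y.
Proof.
  intros [_ [_ [_ HC]]] l Hl x y Hxy eps.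
  destruct (HC l Hl) as [G [HG EG]].
  assert (Hxy' : inD a b x y) by (unfold inD, inIntD in *; lra).
  destruct (HG x y Hxy' eps (cond_pos eps)) as [d [Hd Hd']].
  destruct (int_open a b x y Hxy) as [rho [Hr Hr']].
  assert (Hm : 0 < Rmin d rho) by (apply Rmin_pos; auto).
  exists (mkposreal _ Hm). simpl. intros u v Hu Hv.
  assert (Hu1 := Rmin_l d rho). assert (Hu2 := Rmin_r d rho).
  assert (I : inIntD a b u v) by (apply Hr'; lra).
  rewrite <- (EG u v I), <- (EG x y Hxy).
  apply Hd'; [unfold inD, inIntD in *; lra|lra|lra].
Qed.

Lemma line_deriv a b f F : C3_on_D_with a b f F ->
  forall l, (length l < 3)%nat -> forall x0 y0 u v t,
  inIntD a b (x0 + t * u) (y0 + t * v) ->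
  derivable_pt_lim (fun s => F l (x0 + s * u) (y0 + s * v)) t
    (F (false :: l) (x0 + t * u) (y0 + t * v) * u + F (true :: l) (x0 + t * u) (y0 + t * v) * v).
Proof.
  intros HF l Hl x0 y0 u v t HI.
  assert (HF' := HF). destruct HF' as [_ [_ [HP _]]].
  apply (derivable_pt_lim_comp_2d (F l) (fun s => x0 + s * u) (fun s => y0 + s * v)).
  2,3: apply dlin_loc.
  destruct (int_open a b _ _ HI) as [rho [Hr Hr']].
  apply (diff_partials _ _ _ _ _ rho Hr).
  - intros p q Hp Hq. split.
    + apply (HP l false Hl p q (Hr' p q Hp Hq)).
    + apply (HP l true Hl p q (Hr' p q Hp Hq)).
  - apply (contF a b f F HF); [simpl; lia|auto].
  - apply (contF a b f F HF); [simpl; lia|auto].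
Qed.

Lemma abs_le x d : Rabs x <= d <-> -d <= x <= d.
Proof. unfold Rabs; destruct (Rcase_abs x); split; intros; lra. Qed.
Lemma abs_lt x d : Rabs x < d <-> -d < x < d.
Proof. unfold Rabs; destruct (Rcase_abs x); split; intros; lra. Qed.

Definition sq (px py d x y : R) : Prop := Rabs (x - px) <= d /\ Rabs (y - py) <= d.

Definition Qf (F : list bool -> R -> R -> R) x y u v :=
  u * u * F [false; false] x y + u * v * F [true; false] x y
  + v * u * F [false; true] x y + v * v * F [true; true] x y.

Definition Ctx a b f F px py d mu M : Prop :=
  C3_on_D_with a b f F /\ (forall x y, sq px py d x y -> inIntD a b x y) /\
  0 < mu /\ 0 < M /\
  (forall x y, sq px py d x y -> forall u v, mu * (u * u + v * v) <= Qf F x y u v) /\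
  (forall x y, sq px py d x y -> Rabs (F [false; false] x y) <= M /\
     Rabs (F [true; false] x y) <= M /\ Rabs (F [false; true] x y) <= M /\
     Rabs (F [true; true] x y) <= M).

Lemma seg px py d x y u v t : sq px py d x y -> sq px py d (x + u) (y + v) -> 0 <= t <= 1 ->
  sq px py d (x + t * u) (y + t * v).
Proof.
  unfold sq; rewrite !abs_le; intros [[H1 H2] [H3 H4]] [[H5 H6] [H7 H8]] Ht.
  replace (x + t * u - px) with ((1 - t) * (x - px) + t * (x + u - px)) by ring.
  replace (y + t * v - py) with ((1 - t) * (y - py) + t * (y + v - py)) by ring.
  nra.
Qed.

Lemma two_abs u v : 2 * Rabs (u * v) <= u * u + v * v.
Proof.
  pose proof (Rle_0_sqr (u - v)). pose proof (Rle_0_sqr (u + v)). unfold Rsqr in *.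
  unfold Rabs; destruct (Rcase_abs (u * v)); nra.
Qed.

Lemma Q_up F x y u v M :
  Rabs (F [false; false] x y) <= M -> Rabs (F [true; false] x y) <= M ->
  Rabs (F [false; true] x y) <= M -> Rabs (F [true; true] x y) <= M ->
  Qf F x y u v <= 2 * M * (u * u + v * v).
Proof.
  unfold Qf; rewrite !abs_le; intros. 
  assert (u * u * F [false; false] x y <= M * (u * u)) by nra.
  assert (v * v * F [true; true] x y <= M * (v * v)) by nra.
  assert (u * v * F [true; false] x y <= M * Rabs (u * v)).
  { unfold Rabs; destruct (Rcase_abs (u * v)); nra. }
  assert (v * u * F [false; true] x y <= M * Rabs (u * v)).
  { replace (v * u) with (u * v) by ring. unfold Rabs; destruct (Rcase_abs (u * v)); nra. }
  assert (2 * Rabs (u * v) <= u * u + v * v).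
  { apply two_abs. }
  nra.
Qed.

Lemma g2_deriv a b f F x y u v t :
  C3_on_D_with a b f F -> inIntD a b (x + t * u) (y + t * v) ->
  derivable_pt_lim (fun s => F [false] (x + s * u) (y + s * v) * u +
                             F [true] (x + s * u) (y + s * v) * v) t
    (Qf F (x + t * u) (y + t * v) u v).
Proof.
  intros HF HI. unfold Qf.
  eapply dl_eq; [|apply (dplus (fun s => F [false] (x + s * u) (y + s * v) * u)
                            (fun s => F [true] (x + s * u) (y + s * v) * v));
                  apply dmulc; apply (line_deriv a b f F HF); simpl; auto].
  ring.
Qed.

Lemma TL_low a b f F px py d mu M x y u v : Ctx a b f F px py d mu M ->
  sq px py d x y -> sq px py d (x + u) (y + v) ->
  f x y + (F [false] x y * u + F [true] x y * v) + mu / 2 * (u * u + v * v) <= f (x + u) (y + v).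
Proof.
  intros HC Hs1 Hs2. assert (HC' := HC). destruct HC' as [HF [HK [Hmu [HM [HQ HB]]]]].
  assert (Ff : F [] = f) by (destruct HF; auto).
  assert (E := taylor_low (fun s => F [] (x + s * u) (y + s * v))
                 (fun s => F [false] (x + s * u) (y + s * v) * u + F [true] (x + s * u) (y + s * v) * v)
                 (fun s => Qf F (x + s * u) (y + s * v) u v) (mu * (u * u + v * v)) 1).
  simpl in E. rewrite Ff in E.
  replace (x + 0 * u) with x in E by ring. replace (y + 0 * v) with y in E by ring.
  replace (x + 1 * u) with (x + u) in E by ring. replace (y + 1 * v) with (y + v) in E by ring.
  replace (mu / 2 * (u * u + v * v)) with (mu * (u * u + v * v) / 2 * (1 * 1)) by field.
  replace (F [false] x y * u + F [true] x y * v) with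
     ((F [false] x y * u + F [true] x y * v) * 1) by ring.
  apply E; [lra| | |].
  - intros t Ht. rewrite <- Ff. apply (line_deriv a b f F HF); [simpl; lia|].
    apply HK, seg; auto.
  - intros t Ht. apply (g2_deriv a b f F); auto. apply HK, seg; auto.
  - intros t Ht. apply HQ, seg; auto.
Qed.

Lemma TL_up a b f F px py d mu M x y u v : Ctx a b f F px py d mu M ->
  sq px py d x y -> sq px py d (x + u) (y + v) ->
  f (x + u) (y + v) <= f x y + (F [false] x y * u + F [true] x y * v) + M * (u * u + v * v).
Proof.
  intros HC Hs1 Hs2. assert (HC' := HC). destruct HC' as [HF [HK [Hmu [HM [HQ HB]]]]].
  assert (Ff : F [] = f) by (destruct HF; auto).
  assert (E := taylor_up (fun s => F [] (x + s * u) (y + s * v))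
                 (fun s => F [false] (x + s * u) (y + s * v) * u + F [true] (x + s * u) (y + s * v) * v)
                 (fun s => Qf F (x + s * u) (y + s * v) u v) (2 * M * (u * u + v * v)) 1).
  simpl in E. rewrite Ff in E.
  replace (x + 0 * u) with x in E by ring. replace (y + 0 * v) with y in E by ring.
  replace (x + 1 * u) with (x + u) in E by ring. replace (y + 1 * v) with (y + v) in E by ring.
  replace (M * (u * u + v * v)) with (2 * M * (u * u + v * v) / 2 * (1 * 1)) by field.
  replace (F [false] x y * u + F [true] x y * v) with
     ((F [false] x y * u + F [true] x y * v) * 1) by ring.
  apply E; [lra| | |].
  - intros t Ht. rewrite <- Ff. apply (line_deriv a b f F HF); [simpl; lia|].
    apply HK, seg; auto.
  - intros t Ht. apply (g2_deriv a b f F); auto. apply HK, seg; auto.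
  - intros t Ht. assert (S := seg _ _ _ _ _ _ _ t Hs1 Hs2 Ht).
    destruct (HB _ _ S) as [B1 [B2 [B3 B4]]]. apply Q_up; auto.
Qed.

Lemma grad_bound a b f F px py d mu M x y : Ctx a b f F px py d mu M ->
  sq px py d x y ->
  Rabs (F [false] x y - F [false] px py) <= M * (Rabs (x - px) + Rabs (y - py)) /\
  Rabs (F [true] x y - F [true] px py) <= M * (Rabs (x - px) + Rabs (y - py)).
Proof.
  intros HC Hs. assert (HC' := HC). destruct HC' as [HF [HK [Hmu [HM [HQ HB]]]]].
  assert (Hp : sq px py d px py).
  { unfold sq. rewrite !Rminus_diag, Rabs_R0. destruct Hs as [H _].
    assert (0 <= Rabs (x - px)) by apply Rabs_pos. split; lra. }
  assert (Hs' : sq px py d (px + (x - px)) (py + (y - py))).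
  { replace (px + (x - px)) with x by ring. replace (py + (y - py)) with y by ring. auto. }
  assert (Key : forall l, l = [false] \/ l = [true] ->
     Rabs (F l x y - F l px py) <= M * (Rabs (x - px) + Rabs (y - py))).
  { intros l Hl.
    destruct (MVT_abs (fun s => F l (px + s * (x - px)) (py + s * (y - py)))
      (fun s => F (false :: l) (px + s * (x - px)) (py + s * (y - py)) * (x - px) +
                F (true :: l) (px + s * (x - px)) (py + s * (y - py)) * (y - py)) 0 1)
      as [c [Ec Hc]].
    { intros c Hc. rewrite Rmin_left, Rmax_right in Hc by lra.
      apply (line_deriv a b f F HF); [destruct Hl as [-> | ->]; simpl; lia|].
      apply HK, seg; auto. }
    rewrite Rmin_left, Rmax_right in Hc by lra.
    simpl in Ec.
    replace (px + 1 * (x - px)) with x in Ec by ring.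
    replace (py + 1 * (y - py)) with y in Ec by ring.
    replace (px + 0 * (x - px)) with px in Ec by ring.
    replace (py + 0 * (y - py)) with py in Ec by ring.
    rewrite Ec. replace (1 - 0) with 1 by ring. rewrite Rabs_R1, Rmult_1_r.
    assert (S := seg _ _ _ _ _ _ _ c Hp Hs' Hc).
    destruct (HB _ _ S) as [B1 [B2 [B3 B4]]].
    eapply Rle_trans; [apply Rabs_triang|]. rewrite !Rabs_mult.
    assert (0 <= Rabs (x - px)) by apply Rabs_pos.
    assert (0 <= Rabs (y - py)) by apply Rabs_pos.
    destruct Hl as [-> | ->]; simpl; nra. }
  split; apply Key; auto.
Qed.

Lemma pd_quant A B C D :
  (forall u v, (u, v) <> (0, 0) -> 0 < u * u * A + u * v * B + v * u * C + v * v * D) ->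
  exists mu, 0 < mu /\ forall u v, mu * (u * u + v * v) <= u * u * A + u * v * B + v * u * C + v * v * D.
Proof.
  intros H.
  assert (HA : 0 < A).
  { assert (E := H 1 0). assert ((1, 0) <> (0, 0)) as N by (intro Q; inversion Q; lra).
    specialize (E N). lra. }
  assert (HD : 0 < D).
  { assert (E := H 0 1). assert ((0, 1) <> (0, 0)) as N by (intro Q; inversion Q; lra).
    specialize (E N). lra. }
  set (S := B + C).
  assert (HS : 0 < 4 * A * D - S * S).
  { assert (E := H S (-2 * A)). assert ((S, -2 * A) <> (0, 0)) as N by (intro Q; inversion Q; lra).
    specialize (E N).
    replace (S * S * A + S * (-2 * A) * B + -2 * A * S * C + -2 * A * (-2 * A) * D)
      with (A * (4 * A * D - S * S)) in E by (unfold S; ring).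
    apply (Rmult_lt_reg_l A); lra. }
  set (mu := (4 * A * D - S * S) / (8 * (A + D))).
  assert (Hmu : 0 < mu) by (unfold mu; apply Rdiv_lt_0_compat; lra).
  assert (Hmu2 : mu * (A + D) = (4 * A * D - S * S) / 8) by (unfold mu; field; lra).
  assert (HSS : 0 <= S * S) by (pose proof (Rle_0_sqr S); unfold Rsqr in *; lra).
  assert (Hal : mu < A).
  { assert (mu * (A + D) < A * (A + D)) by (rewrite Hmu2; nra). 
    apply (Rmult_lt_reg_r (A + D)); lra. }
  assert (Hbe : mu < D).
  { assert (mu * (A + D) < D * (A + D)) by (rewrite Hmu2; nra).
    apply (Rmult_lt_reg_r (A + D)); lra. }
  exists mu. split; auto. intros u v.
  set (al := A - mu). set (be := D - mu).
  assert (Hab : S * S <= 4 * al * be).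
  { unfold al, be.
    replace (4 * (A - mu) * (D - mu)) with (4 * A * D - 4 * (mu * (A + D)) + 4 * (mu * mu)) by ring.
    rewrite Hmu2. assert (0 <= mu * mu) by nra. lra. }
  assert (Q : 0 <= al * (al * u * u + S * u * v + be * v * v)).
  { replace (al * (al * u * u + S * u * v + be * v * v)) with
      ((al * u + S * v / 2) * (al * u + S * v / 2) + (al * be - S * S / 4) * (v * v)) by field.
    pose proof (Rle_0_sqr (al * u + S * v / 2)). pose proof (Rle_0_sqr v). unfold Rsqr in *.
    assert (0 <= al * be - S * S / 4) by lra.
    assert (0 <= (al * be - S * S / 4) * (v * v)) by (apply Rmult_le_pos; lra).
    lra. }
  assert (Hal0 : 0 < al) by (unfold al; lra).
  assert (0 <= al * u * u + S * u * v + be * v * v).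
  { destruct (Rle_lt_dec 0 (al * u * u + S * u * v + be * v * v)) as [h|h]; auto.
    assert (al * (al * u * u + S * u * v + be * v * v) < 0) by (apply Rmult_pos_neg; lra). lra. }
  unfold al, be, S in *. nra.
Qed.

Lemma quad_bound a1 a2 a3 a4 e u v :
  Rabs a1 <= e -> Rabs a2 <= e -> Rabs a3 <= e -> Rabs a4 <= e ->
  Rabs (u * u * a1 + u * v * a2 + v * u * a3 + v * v * a4) <= 2 * e * (u * u + v * v).
Proof.
  rewrite !abs_le. intros H1 H2 H3 H4. assert (T := two_abs u v).
  pose proof (Rle_0_sqr u). pose proof (Rle_0_sqr v). unfold Rsqr in *.
  assert (u * u * a1 <= e * (u * u)) by nra.
  assert (v * v * a4 <= e * (v * v)) by nra.
  assert (- (e * (u * u)) <= u * u * a1) by nra.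
  assert (- (e * (v * v)) <= v * v * a4) by nra.
  assert (Z2 : Rabs (u * v * a2) <= e * Rabs (u * v)).
  { rewrite Rabs_mult. rewrite Rmult_comm. apply Rmult_le_compat_r; [apply Rabs_pos|]. apply abs_le; lra. }
  assert (Z3 : Rabs (v * u * a3) <= e * Rabs (u * v)).
  { replace (v * u) with (u * v) by ring. rewrite Rabs_mult. rewrite Rmult_comm. apply Rmult_le_compat_r; [apply Rabs_pos|]. apply abs_le; lra. }
  rewrite abs_le in Z2, Z3.
  assert (0 <= e) by lra.
  assert (e * (2 * Rabs (u * v)) <= e * (u * u + v * v)) by (apply Rmult_le_compat_l; lra).
  split; lra.
Qed.

Lemma make_ctx a b f F px py :
  C3_on_D_with a b f F -> inIntD a b px py -> hessian_pos_def F px py ->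
  exists d mu M, 0 < d /\ Ctx a b f F px py d mu M.
Proof.
  intros HF Hp Hh.
  destruct (pd_quant _ _ _ _ Hh) as [mu0 [Hmu0 Hq0]].
  assert (He : 0 < mu0 / 4) by lra.
  set (e := mkposreal _ He).
  destruct (contF a b f F HF [false; false] ltac:(simpl; lia) px py Hp e) as [d1 Hd1].
  destruct (contF a b f F HF [true; false] ltac:(simpl; lia) px py Hp e) as [d2 Hd2].
  destruct (contF a b f F HF [false; true] ltac:(simpl; lia) px py Hp e) as [d3 Hd3].
  destruct (contF a b f F HF [true; true] ltac:(simpl; lia) px py Hp e) as [d4 Hd4].
  destruct (int_open a b px py Hp) as [rho [Hr Hr']].
  set (d := Rmin (Rmin (Rmin d1 d2) (Rmin d3 d4)) rho / 2).
  assert (Hd0 : 0 < Rmin (Rmin (Rmin d1 d2) (Rmin d3 d4)) rho).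
  { destruct d1, d2, d3, d4; simpl. repeat apply Rmin_pos; auto. }
  assert (Hsq : forall x y, sq px py d x y ->
     Rabs (x - px) < d1 /\ Rabs (x - px) < d2 /\ Rabs (x - px) < d3 /\ Rabs (x - px) < d4 /\ Rabs (x - px) < rho /\
     Rabs (y - py) < d1 /\ Rabs (y - py) < d2 /\ Rabs (y - py) < d3 /\ Rabs (y - py) < d4 /\ Rabs (y - py) < rho).
  { intros x y [Hx Hy]. unfold d in *.
    assert (R1 := Rmin_l (Rmin (Rmin d1 d2) (Rmin d3 d4)) rho).
    assert (R2 := Rmin_r (Rmin (Rmin d1 d2) (Rmin d3 d4)) rho).
    assert (R3 := Rmin_l (Rmin d1 d2) (Rmin d3 d4)).
    assert (R4 := Rmin_r (Rmin d1 d2) (Rmin d3 d4)).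
    assert (R5 := Rmin_l d1 d2). assert (R6 := Rmin_r d1 d2).
    assert (R7 := Rmin_l d3 d4). assert (R8 := Rmin_r d3 d4).
    lra. }
  set (A := F [false; false] px py). set (B := F [true; false] px py).
  set (C := F [false; true] px py). set (D := F [true; true] px py).
  exists d, (mu0 / 2), (Rabs A + Rabs B + Rabs C + Rabs D + mu0 / 4).
  split; [unfold d; lra|].
  split; [auto|]. split.
  { intros x y Hs. destruct (Hsq x y Hs) as [_ [_ [_ [_ [? [_ [_ [_ [_ ?]]]]]]]]]. auto. }
  split; [lra|]. split.
  { pose proof (Rabs_pos A). pose proof (Rabs_pos B). pose proof (Rabs_pos C). pose proof (Rabs_pos D). lra. }
  assert (Hdiff : forall x y, sq px py d x y ->
     Rabs (F [false; false] x y - A) <= mu0 / 4 /\ Rabs (F [true; false] x y - B) <= mu0 / 4 /\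
     Rabs (F [false; true] x y - C) <= mu0 / 4 /\ Rabs (F [true; true] x y - D) <= mu0 / 4).
  { intros x y Hs. destruct (Hsq x y Hs) as [h1 [h2 [h3 [h4 [_ [k1 [k2 [k3 [k4 _]]]]]]]]].
    split; [apply Rlt_le, (Hd1 x y h1 k1)|].
    split; [apply Rlt_le, (Hd2 x y h2 k2)|].
    split; [apply Rlt_le, (Hd3 x y h3 k3)|apply Rlt_le, (Hd4 x y h4 k4)]. }
  split.
  - intros x y Hs u v. destruct (Hdiff x y Hs) as [e1 [e2 [e3 e4]]].
    assert (Q := quad_bound _ _ _ _ _ u v e1 e2 e3 e4).
    assert (Q0 := Hq0 u v). fold A B C D in Q0.
    unfold Qf. apply abs_le in Q.
    replace (u * u * (F [false; false] x y - A) + u * v * (F [true; false] x y - B) +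
             v * u * (F [false; true] x y - C) + v * v * (F [true; true] x y - D))
     with ((u * u * F [false; false] x y + u * v * F [true; false] x y +
             v * u * F [false; true] x y + v * v * F [true; true] x y) -
           (u * u * A + u * v * B + v * u * C + v * v * D)) in Q by ring.
    lra.
  - intros x y Hs. destruct (Hdiff x y Hs) as [e1 [e2 [e3 e4]]].
    rewrite abs_le in e1, e2, e3, e4.
    pose proof (Rabs_pos A). pose proof (Rabs_pos B). pose proof (Rabs_pos C). pose proof (Rabs_pos D).
    pose proof (Rle_abs A). pose proof (Rle_abs B). pose proof (Rle_abs C). pose proof (Rle_abs D).
    pose proof (Rabs_maj2 A). pose proof (Rabs_maj2 B). pose proof (Rabs_maj2 C). pose proof (Rabs_maj2 D).
    rewrite !abs_le. repeat split; lra.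
Qed.

Lemma grad0 a b f F px py : C3_on_D_with a b f F -> inIntD a b px py ->
  local_min_on_D a b f px py -> F [false] px py = 0 /\ F [true] px py = 0.
Proof.
  intros HF Hp [dl [Hdl Hmin]].
  destruct HF as [Ff [_ [HP _]]].
  destruct (int_open a b px py Hp) as [rho [Hr Hr']].
  set (m := Rmin dl rho).
  assert (Hm : 0 < m) by (apply Rmin_pos; auto).
  assert (M1 := Rmin_l dl rho). assert (M2 := Rmin_r dl rho). fold m in M1, M2.
  assert (Hint : forall x y, inIntD a b x y -> inD a b x y) by (unfold inD, inIntD; intros; lra).
  split.
  - assert (D := HP [] false ltac:(simpl; lia) px py Hp). simpl in D. rewrite Ff in D.
    assert (E := deriv_minimum (fun t => f t py) (px - m) (px + m) px (exist _ _ D)).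
    simpl in E. apply E; try lra.
    intros x H1 H2. apply Hmin.
    + apply Hint, Hr'; rewrite ?Rminus_diag, ?Rabs_R0; try lra. apply abs_lt; lra.
    + apply abs_lt; lra.
    + rewrite Rminus_diag, Rabs_R0; lra.
  - assert (D := HP [] true ltac:(simpl; lia) px py Hp). simpl in D. rewrite Ff in D.
    assert (E := deriv_minimum (fun t => f px t) (py - m) (py + m) py (exist _ _ D)).
    simpl in E. apply E; try lra.
    intros y H1 H2. apply Hmin.
    + apply Hint, Hr'; rewrite ?Rminus_diag, ?Rabs_R0; try lra. apply abs_lt; lra.
    + rewrite Rminus_diag, Rabs_R0; lra.
    + apply abs_lt; lra.
Qed.

Lemma round_nat x : 0 <= x -> exists k : nat, Rabs (INR k - x) <= 1 / 2.
Proof.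
  intros Hx. destruct (archimed (x + 1 / 2)) as [H1 H2].
  set (z := up (x + 1 / 2)) in *.
  assert (Hz : (1 <= z)%Z).
  { apply le_IZR. destruct (Z_lt_le_dec z 1) as [h|h]; [|apply IZR_le; auto].
    assert (h' : (z <= 0)%Z) by lia. apply IZR_le in h'. lra. }
  exists (Z.to_nat (z - 1)).
  rewrite INR_IZR_INZ, Znat.Z2Nat.id by lia. rewrite minus_IZR. apply abs_le. lra.
Qed.

Lemma list_argmin {T : Type} (P : T -> Prop) (g : T -> R) (L : list T) :
  (exists x, In x L /\ P x) ->
  exists x, In x L /\ P x /\ forall y, In y L -> P y -> g x <= g y.
Proof.
  induction L as [|a L IH]; intros [x [Hx Px]]; [destruct Hx|].
  destruct (classic (exists x, In x L /\ P x)) as [E|NE].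
  - destruct (IH E) as [m [Hm [Pm Mm]]].
    destruct (classic (P a /\ g a <= g m)) as [[Pa Ha]|Na].
    + exists a. split; [left; auto|]. split; auto.
      intros y [<-|Hy] Py; [lra|]. specialize (Mm y Hy Py). lra.
    + exists m. split; [right; auto|]. split; auto.
      intros y [<-|Hy] Py; [|auto]. 
      destruct (Rle_lt_dec (g m) (g a)); auto. exfalso; apply Na; split; auto; lra.
  - exists a. destruct Hx as [<-|Hx]; [|exfalso; apply NE; eauto].
    split; [left; auto|]. split; auto.
    intros y [<-|Hy] Py; [lra|]. exfalso; apply NE; eauto.
Qed.

Lemma grid_argmin (P : nat -> nat -> Prop) (g : nat -> nat -> R) n :
  (exists i j, (i <= n)%nat /\ (j <= n)%nat /\ P i j) ->
  exists i j, (i <= n)%nat /\ (j <= n)%nat /\ P i j /\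
    forall l m, (l <= n)%nat -> (m <= n)%nat -> P l m -> g i j <= g l m.
Proof.
  intros [i [j [Hi [Hj Pij]]]].
  set (L := list_prod (seq 0 (S n)) (seq 0 (S n))).
  assert (HL : forall i j, In (i, j) L <-> (i <= n)%nat /\ (j <= n)%nat).
  { intros. unfold L. rewrite in_prod_iff, !in_seq. lia. }
  destruct (list_argmin (fun p => P (fst p) (snd p)) (fun p => g (fst p) (snd p)) L)
    as [[i0 j0] [Hin [Pm Mm]]].
  { exists (i, j). split; auto. apply HL; auto. }
  apply HL in Hin. exists i0, j0. simpl in *. intuition.
  apply (Mm (l, m)); auto. apply HL; auto.
Qed.

Lemma large_n C e : 0 < e -> exists N : nat, forall n : nat, (N <= n)%nat -> (1 <= n)%nat ->
  C / INR n < e.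
Proof.
  intros He. destruct (archimed (C / e)) as [H1 _].
  exists (Z.to_nat (up (C / e))). intros n Hn H1n.
  assert (Hn0 : 0 < INR n) by (apply lt_0_INR; lia).
  assert (C / e < INR n).
  { eapply Rlt_le_trans; [apply H1|].
    destruct (Z_lt_le_dec (up (C / e)) 0) as [h|h].
    - apply Rle_trans with 0; [apply IZR_le; lia|apply pos_INR].
    - rewrite <- (Znat.Z2Nat.id (up (C/e))) by lia. rewrite <- INR_IZR_INZ. apply le_INR; auto. }
  apply (Rmult_lt_reg_r (INR n)); auto. unfold Rdiv. rewrite Rmult_assoc, Rinv_l by lra.
  apply (Rmult_lt_reg_r (/ e)); [apply Rinv_0_lt_compat; auto|].
  replace (e * INR n * / e) with (INR n) by (field; lra). lra.
Qed.

Lemma gx_diff a n l i : gx a n l - gx a n i = (INR l - INR i) * a * / INR n.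
Proof. unfold gx, Rdiv. ring. Qed.
Lemma gy_diff b n l i : gy b n l - gy b n i = (INR l - INR i) * b * / INR n.
Proof. unfold gy, Rdiv. ring. Qed.

Lemma gx_le a n k : 0 < a -> (1 <= n)%nat -> gx a n k <= a -> (k <= n)%nat.
Proof.
  intros Ha Hn H. unfold gx in H.
  assert (Hn0 : 0 < INR n) by (apply lt_0_INR; lia).
  assert (INR k <= INR n).
  { apply (Rmult_le_reg_r (a / INR n)); [apply Rdiv_lt_0_compat; auto|].
    replace (INR n * (a / INR n)) with a by (field; lra).
    replace (INR k * (a / INR n)) with (INR k / INR n * a) by (field; lra). auto. }
  apply INR_le; auto.
Qed.

Lemma gy_le b n k : 0 < b -> (1 <= n)%nat -> gy b n k <= b -> (k <= n)%nat.
Proof. apply gx_le. Qed.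

Lemma sqrt_free s K h : 0 <= s -> 0 <= K -> 0 < h -> s * s <= K * (h * h) -> s <= (K + 1) * h.
Proof.
  intros Hs HK Hh H.
  set (y := s / h).
  assert (Hy : s = y * h) by (unfold y; field; lra).
  rewrite Hy in H |- *.
  assert (0 <= y) by (unfold y; apply Rdiv_le_0_compat; lra).
  assert (y * y <= K).
  { apply (Rmult_le_reg_r (h * h)); [nra|]. nra. }
  apply Rmult_le_compat_r; [lra|].
  destruct (Rle_lt_dec y 1); nra.
Qed.

Lemma round_coord a n x : 0 < a -> (1 <= n)%nat -> 0 <= x ->
  exists k, Rabs (gx a n k - x) <= a / 2 * / INR n.
Proof.
  intros Ha Hn Hx.
  assert (Hn0 : 0 < INR n) by (apply lt_0_INR; lia).
  destruct (round_nat (x * INR n / a)) as [k Hk].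
  { apply Rmult_le_pos; [apply Rmult_le_pos; lra|]. left; apply Rinv_0_lt_compat; auto. }
  exists k. replace (gx a n k - x) with ((INR k - x * INR n / a) * (a * / INR n)) by (unfold gx; field; lra).
  rewrite Rabs_mult, (Rabs_pos_eq (a * / INR n)).
  2: { apply Rmult_le_pos; [lra|left; apply Rinv_0_lt_compat; auto]. }
  replace (a / 2 * / INR n) with (1 / 2 * (a * / INR n)) by (unfold Rdiv; ring).
  apply Rmult_le_compat_r; auto. apply Rmult_le_pos; [lra|left; apply Rinv_0_lt_compat; auto].
Qed.

Lemma exist_min a b f F px py d mu M n :
  0 < a -> 0 < b -> Ctx a b f F px py d mu M ->
  F [false] px py = 0 -> F [true] px py = 0 -> (1 <= n)%nat ->
  (a + b) * / INR n <= d ->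
  exists i0 j0, (i0 <= n)%nat /\ (j0 <= n)%nat /\ sq px py d (gx a n i0) (gy b n j0) /\
    (forall l m, (l <= n)%nat -> (m <= n)%nat -> sq px py d (gx a n l) (gy b n m) ->
       f (gx a n i0) (gy b n j0) <= f (gx a n l) (gy b n m)) /\
    Rabs (gx a n i0 - px) + Rabs (gy b n j0 - py) <=
      (2 * M * (a + b) * (a + b) / mu + 1) * / INR n.
Proof.
  intros Ha Hb HC Gx Gy Hn Hd.
  assert (HC' := HC). destruct HC' as [HF [HK [Hmu [HM [HQ HB]]]]].
  assert (Hn0 : 0 < INR n) by (apply lt_0_INR; lia).
  set (h := / INR n) in *.
  assert (Hh : 0 < h) by (apply Rinv_0_lt_compat; auto).
  assert (Hp : sq px py d px py).
  { unfold sq. rewrite !Rminus_diag, Rabs_R0. assert (0 < (a + b) * h) by (apply Rmult_lt_0_compat; lra). split; lra. }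
  destruct (HK px py Hp) as [[Hpx1 Hpx2] [Hpy1 Hpy2]].
  destruct (round_coord a n px Ha Hn ltac:(lra)) as [k1 Hk1].
  destruct (round_coord b n py Hb Hn ltac:(lra)) as [k2 Hk2].
  fold h in Hk1, Hk2. change (gx b n k2) with (gy b n k2) in Hk2.
  assert (a / 2 * h <= (a + b) * h) by (apply Rmult_le_compat_r; lra).
  assert (b / 2 * h <= (a + b) * h) by (apply Rmult_le_compat_r; lra).
  assert (Hg0 : sq px py d (gx a n k1) (gy b n k2)) by (split; lra).
  destruct (grid_argmin (fun i j => sq px py d (gx a n i) (gy b n j))
                        (fun i j => f (gx a n i) (gy b n j)) n) as [i0 [j0 [Hi0 [Hj0 [Hs0 Hm0]]]]].
  { exists k1, k2. destruct (HK _ _ Hg0) as [[? ?] [? ?]].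
    split; [apply (gx_le a n k1); auto; lra|]. split; [apply (gy_le b n k2); auto; lra|auto]. }
  exists i0, j0. split; auto. split; auto. split; auto. split; auto.
  assert (E1 := Hm0 k1 k2 ltac:(apply (gx_le a n k1); auto; destruct (HK _ _ Hg0); lra)
                  ltac:(apply (gy_le b n k2); auto; destruct (HK _ _ Hg0); lra) Hg0).
  simpl in E1.
  set (e1 := gx a n k1 - px) in *. set (e2 := gy b n k2 - py) in *.
  assert (T1 := TL_up a b f F px py d mu M px py e1 e2 HC Hp).
  replace (px + e1) with (gx a n k1) in T1 by (unfold e1; ring).
  replace (py + e2) with (gy b n k2) in T1 by (unfold e2; ring).
  specialize (T1 Hg0). rewrite Gx, Gy in T1.
  set (w1 := gx a n i0 - px) in *. set (w2 := gy b n j0 - py) in *.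
  assert (T2 := TL_low a b f F px py d mu M px py w1 w2 HC Hp).
  replace (px + w1) with (gx a n i0) in T2 by (unfold w1; ring).
  replace (py + w2) with (gy b n j0) in T2 by (unfold w2; ring).
  specialize (T2 Hs0). rewrite Gx, Gy in T2.
  assert (Ee : e1 * e1 + e2 * e2 <= (a + b) * (a + b) / 2 * (h * h)).
  { apply abs_le in Hk1. apply abs_le in Hk2. nra. }
  assert (W : mu / 2 * (w1 * w1 + w2 * w2) <= M * ((a + b) * (a + b) / 2 * (h * h))) by nra.
  assert (W2 : (Rabs w1 + Rabs w2) * (Rabs w1 + Rabs w2) <= 2 * (w1 * w1 + w2 * w2)).
  { assert (T := two_abs w1 w2). rewrite Rabs_mult in T.
    assert (Rabs w1 * Rabs w1 = w1 * w1) by (rewrite <- Rabs_mult; apply Rabs_pos_eq; pose proof (Rle_0_sqr w1); unfold Rsqr in *; lra).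
    assert (Rabs w2 * Rabs w2 = w2 * w2) by (rewrite <- Rabs_mult; apply Rabs_pos_eq; pose proof (Rle_0_sqr w2); unfold Rsqr in *; lra).
    nra. }
  apply sqrt_free; auto.
  - pose proof (Rabs_pos w1); pose proof (Rabs_pos w2); lra.
  - apply Rmult_le_pos; [|left; apply Rinv_0_lt_compat; auto]. 
    apply Rmult_le_pos; [nra|]. pose proof (Rle_0_sqr (a + b)); unfold Rsqr in *; nra.
  - eapply Rle_trans; [apply W2|].
    apply (Rmult_le_reg_l (mu / 2)); [lra|].
    replace (mu / 2 * (2 * M * (a + b) * (a + b) / mu * (h * h))) with
            (M * ((a + b) * (a + b)) * (h * h)) by (field; lra).
    nra.
Qed.

Lemma abs_sq x : Rabs x * Rabs x = x * x.
Proof. rewrite <- Rabs_mult. apply Rabs_pos_eq. pose proof (Rle_0_sqr x); unfold Rsqr in *; lra. Qed.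

Lemma uniq_part a b f F px py d mu M n i j i0 j0 rho r Cm :
  0 < a -> 0 < b -> Ctx a b f F px py d mu M ->
  F [false] px py = 0 -> F [true] px py = 0 -> (1 <= n)%nat ->
  nondegenerate a b f n ->
  (i0 <= n)%nat -> (j0 <= n)%nat -> sq px py d (gx a n i0) (gy b n j0) ->
  (forall l m, (l <= n)%nat -> (m <= n)%nat -> sq px py d (gx a n l) (gy b n m) ->
       f (gx a n i0) (gy b n j0) <= f (gx a n l) (gy b n m)) ->
  0 <= Cm ->
  Rabs (gx a n i0 - px) + Rabs (gy b n j0 - py) <= Cm * / INR n ->
  (i <= n)%nat -> (j <= n)%nat -> Rabs (gx a n i - px) < d / 2 -> Rabs (gy b n j - py) < d / 2 ->
  minimal_in_circle a b f n r i j ->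
  0 < rho -> rho + 1 / 2 <= r -> 1 <= r -> 4 * M * rho <= mu * r ->
  2 * M * (a + b) * (a + b) + M * (a + b) * Cm <= mu / 4 * rho * (Rmin a b * Rmin a b) ->
  (rho + 1) * (a + b) * / INR n <= d / 2 ->
  i = i0 /\ j = j0.
Proof.
  intros Ha Hb HC Gx Gy Hn Hnd Hi0 Hj0 Hsm Hm0 HCm Hcm Hi Hj Hqx Hqy Hmin Hrho Hr1 Hr3 Hr2 Hrho2 Hlarge.
  assert (HC' := HC). destruct HC' as [HF [HK [Hmu [HM [HQ HB]]]]].
  assert (Hn0 : 0 < INR n) by (apply lt_0_INR; lia).
  set (h := / INR n) in *.
  assert (Hh : 0 < h) by (apply Rinv_0_lt_compat; auto).
  set (A := a + b) in *. set (c := Rmin a b) in *.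
  assert (Hca : c <= a) by apply Rmin_l. assert (Hcb : c <= b) by apply Rmin_r.
  assert (Hc0 : 0 < c) by (apply Rmin_pos; auto).
  set (xq := gx a n i) in *. set (yq := gy b n j) in *.
  set (xm := gx a n i0) in *. set (ym := gy b n j0) in *.
  assert (Hd0 : 0 <= d) by (destruct Hsm as [Hs _]; pose proof (Rabs_pos (xm - px)); lra).
  assert (Hsq : sq px py d xq yq) by (split; lra).
  destruct (classic ((i, j) = (i0, j0))) as [E|NE]; [inversion E; auto|exfalso].
  assert (Hfm : f xm ym < f xq yq).
  { assert (f xm ym <= f xq yq) by (apply Hm0; auto).
    assert (f xq yq <> f xm ym) by (apply Hnd; auto). lra. }
  set (d1 := INR i0 - INR i). set (d2 := INR j0 - INR j).
  set (Dd := Rmax (Rabs d1) (Rabs d2)).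
  assert (HD1 : Rabs d1 <= Dd) by apply Rmax_l. assert (HD2 : Rabs d2 <= Dd) by apply Rmax_r.
  destruct (Rle_lt_dec Dd r) as [Hle|Hgt].
  { assert (f xq yq <= f xm ym); [|lra].
    apply Hmin. split; auto. }
  set (w1 := xm - xq). set (w2 := ym - yq).
  assert (Ew1 : w1 = d1 * a * h) by (unfold w1, xm, xq, d1; apply gx_diff).
  assert (Ew2 : w2 = d2 * b * h) by (unfold w2, ym, yq, d2; apply gy_diff).
  set (W := w1 * w1 + w2 * w2).
  set (t := rho / Dd).
  assert (HDd : 0 < Dd) by lra.
  assert (HtD : t * Dd = rho) by (unfold t; field; lra).
  assert (Ht0 : 0 < t) by (unfold t; apply Rdiv_lt_0_compat; lra).
  assert (Ht1 : t < 1) by (apply (Rmult_lt_reg_r Dd); lra).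
  assert (HMt : M * t <= mu / 4).
  { assert (t * r <= rho) by (rewrite <- HtD; apply Rmult_le_compat_l; lra).
    nra. }
  assert (T1 := TL_low a b f F px py d mu M xq yq w1 w2 HC Hsq).
  replace (xq + w1) with xm in T1 by (unfold w1; ring).
  replace (yq + w2) with ym in T1 by (unfold w2; ring).
  specialize (T1 Hsm). fold W in T1.
  set (G := F [false] xq yq * w1 + F [true] xq yq * w2) in T1.
  assert (Hsm' : sq px py d (xq + w1) (yq + w2)) by (unfold w1, w2; replace (xq + (xm - xq)) with xm by ring; replace (yq + (ym - yq)) with ym by ring; auto).
  set (zx := xq + t * w1). set (zy := yq + t * w2).
  assert (Hsz : sq px py d zx zy) by (apply seg; auto; lra).
  assert (T2 := TL_up a b f F px py d mu M xq yq (t * w1) (t * w2) HC Hsq Hsz).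
  fold zx zy in T2.
  replace (F [false] xq yq * (t * w1) + F [true] xq yq * (t * w2)) with (t * G) in T2 by (unfold G; ring).
  replace (t * w1 * (t * w1) + t * w2 * (t * w2)) with (t * t * W) in T2 by (unfold W; ring).
  assert (HW0 : 0 <= W) by (unfold W; pose proof (Rle_0_sqr w1); pose proof (Rle_0_sqr w2); unfold Rsqr in *; lra).
  assert (Hz1 : f zx zy < f xq yq - mu / 4 * t * W).
  { assert (G < - (mu / 2 * W)) by lra.
    assert (M * t * (t * W) <= mu / 4 * (t * W)) by (apply Rmult_le_compat_r; nra).
    assert (t * G < t * (- (mu / 2 * W))) by (apply Rmult_lt_compat_l; auto).
    replace (M * (t * t * W)) with (M * t * (t * W)) in T2 by ring.
    lra. }
  assert (HWl : c * c * (h * h) * (Dd * Dd) <= W).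
  { assert (Dd * Dd <= d1 * d1 + d2 * d2).
    { unfold Dd, Rmax. destruct (Rle_dec (Rabs d1) (Rabs d2)); rewrite abs_sq;
      pose proof (Rle_0_sqr d1); pose proof (Rle_0_sqr d2); unfold Rsqr in *; lra. }
    unfold W. rewrite Ew1, Ew2.
    assert (c * c <= a * a) by nra. assert (c * c <= b * b) by nra.
    pose proof (Rle_0_sqr d1); pose proof (Rle_0_sqr d2); unfold Rsqr in *.
    assert (0 <= h * h) by nra.
    assert (c * c * (h * h) * (Dd * Dd) <= c * c * (h * h) * (d1 * d1 + d2 * d2)) by (apply Rmult_le_compat_l; nra).
    assert (c * c * (h * h) * (d1 * d1) <= a * a * (h * h) * (d1 * d1)) by (apply Rmult_le_compat_r; nra).
    assert (c * c * (h * h) * (d2 * d2) <= b * b * (h * h) * (d2 * d2)) by (apply Rmult_le_compat_r; nra).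
    nra. }
  assert (HtW : rho * (c * c) * (h * h) * Dd <= t * W).
  { replace (rho * (c * c) * (h * h) * Dd) with (t * (c * c * (h * h) * (Dd * Dd))) by (rewrite <- HtD; ring).
    apply Rmult_le_compat_l; lra. }
  assert (Hxi : 0 <= INR i + t * d1).
  { replace (INR i + t * d1) with ((1 - t) * INR i + t * INR i0) by (unfold d1; ring).
    pose proof (pos_INR i); pose proof (pos_INR i0). nra. }
  assert (Hyi : 0 <= INR j + t * d2).
  { replace (INR j + t * d2) with ((1 - t) * INR j + t * INR j0) by (unfold d2; ring).
    pose proof (pos_INR j); pose proof (pos_INR j0). nra. }
  destruct (round_nat _ Hxi) as [k1 Hk1]. destruct (round_nat _ Hyi) as [k2 Hk2].
  set (e1 := gx a n k1 - zx). set (e2 := gy b n k2 - zy).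
  assert (Ee1 : e1 = (INR k1 - (INR i + t * d1)) * a * h).
  { unfold e1, zx. rewrite Ew1. unfold xq, gx, h, Rdiv. ring. }
  assert (Ee2 : e2 = (INR k2 - (INR j + t * d2)) * b * h).
  { unfold e2, zy. rewrite Ew2. unfold yq, gy, h, Rdiv. ring. }
  assert (He1 : Rabs e1 <= a * h / 2).
  { rewrite Ee1, !Rabs_mult, (Rabs_pos_eq a), (Rabs_pos_eq h) by lra.
    replace (a * h / 2) with (1 / 2 * a * h) by field. 
    apply Rmult_le_compat_r; [lra|]. apply Rmult_le_compat_r; lra. }
  assert (He2 : Rabs e2 <= b * h / 2).
  { rewrite Ee2, !Rabs_mult, (Rabs_pos_eq b), (Rabs_pos_eq h) by lra.
    replace (b * h / 2) with (1 / 2 * b * h) by field. 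
    apply Rmult_le_compat_r; [lra|]. apply Rmult_le_compat_r; lra. }
  assert (Hk1i : Rabs (INR k1 - INR i) <= rho + 1 / 2).
  { replace (INR k1 - INR i) with ((INR k1 - (INR i + t * d1)) + t * d1) by ring.
    eapply Rle_trans; [apply Rabs_triang|]. rewrite Rabs_mult, (Rabs_pos_eq t) by lra.
    assert (t * Rabs d1 <= t * Dd) by (apply Rmult_le_compat_l; lra). lra. }
  assert (Hk2j : Rabs (INR k2 - INR j) <= rho + 1 / 2).
  { replace (INR k2 - INR j) with ((INR k2 - (INR j + t * d2)) + t * d2) by ring.
    eapply Rle_trans; [apply Rabs_triang|]. rewrite Rabs_mult, (Rabs_pos_eq t) by lra.
    assert (t * Rabs d2 <= t * Dd) by (apply Rmult_le_compat_l; lra). lra. }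
  assert (Hsq' : sq px py d (gx a n k1) (gy b n k2)).
  { assert (X1 : gx a n k1 - xq = (INR k1 - INR i) * a * h) by (unfold xq; apply gx_diff).
    assert (X2 : gy b n k2 - yq = (INR k2 - INR j) * b * h) by (unfold yq; apply gy_diff).
    assert (Rabs (gx a n k1 - xq) <= (rho + 1) * A * h).
    { rewrite X1, !Rabs_mult, (Rabs_pos_eq a), (Rabs_pos_eq h) by lra.
      apply Rmult_le_compat_r; [lra|]. unfold A. 
      assert (0 <= Rabs (INR k1 - INR i)) by apply Rabs_pos. nra. }
    assert (Rabs (gy b n k2 - yq) <= (rho + 1) * A * h).
    { rewrite X2, !Rabs_mult, (Rabs_pos_eq b), (Rabs_pos_eq h) by lra.
      apply Rmult_le_compat_r; [lra|]. unfold A. 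
      assert (0 <= Rabs (INR k2 - INR j)) by apply Rabs_pos. nra. }
    split.
    - replace (gx a n k1 - px) with ((gx a n k1 - xq) + (xq - px)) by ring.
      eapply Rle_trans; [apply Rabs_triang|]. lra.
    - replace (gy b n k2 - py) with ((gy b n k2 - yq) + (yq - py)) by ring.
      eapply Rle_trans; [apply Rabs_triang|]. lra. }
  destruct (HK _ _ Hsq') as [[Hk1a Hk1b] [Hk2a Hk2b]].
  assert (Hk1n : (k1 <= n)%nat) by (apply (gx_le a n k1); auto; lra).
  assert (Hk2n : (k2 <= n)%nat) by (apply (gy_le b n k2); auto; lra).
  assert (Hcirc : f xq yq <= f (gx a n k1) (gy b n k2)).
  { apply Hmin. split; auto. split; auto. apply Rmax_lub; lra. }
  assert (T3 := TL_up a b f F px py d mu M zx zy e1 e2 HC Hsz).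
  replace (zx + e1) with (gx a n k1) in T3 by (unfold e1; ring).
  replace (zy + e2) with (gy b n k2) in T3 by (unfold e2; ring).
  specialize (T3 Hsq').
  destruct (grad_bound a b f F px py d mu M zx zy HC Hsz) as [GB1 GB2].
  rewrite Gx, Rminus_0_r in GB1. rewrite Gy, Rminus_0_r in GB2.
  set (Z1 := Rabs (zx - px) + Rabs (zy - py)) in *.
  assert (HZ1 : Z1 <= Dd * A * h + Cm * h).
  { assert (Rabs (zx - px) <= Rabs w1 + Rabs (xm - px)).
    { replace (zx - px) with ((t - 1) * w1 + (xm - px)) by (unfold zx, w1; ring).
      eapply Rle_trans; [apply Rabs_triang|]. rewrite Rabs_mult.
      rewrite (Rabs_left1 (t - 1)) by lra. pose proof (Rabs_pos w1). nra. }
    assert (Rabs (zy - py) <= Rabs w2 + Rabs (ym - py)).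
    { replace (zy - py) with ((t - 1) * w2 + (ym - py)) by (unfold zy, w2; ring).
      eapply Rle_trans; [apply Rabs_triang|]. rewrite Rabs_mult.
      rewrite (Rabs_left1 (t - 1)) by lra. pose proof (Rabs_pos w2). nra. }
    assert (Rabs w1 <= Dd * a * h).
    { rewrite Ew1, !Rabs_mult, (Rabs_pos_eq a), (Rabs_pos_eq h) by lra.
      apply Rmult_le_compat_r; [lra|]. apply Rmult_le_compat_r; lra. }
    assert (Rabs w2 <= Dd * b * h).
    { rewrite Ew2, !Rabs_mult, (Rabs_pos_eq b), (Rabs_pos_eq h) by lra.
      apply Rmult_le_compat_r; [lra|]. apply Rmult_le_compat_r; lra. }
    unfold Z1, A. nra. }
  assert (HZ0 : 0 <= Z1) by (unfold Z1; pose proof (Rabs_pos (zx - px)); pose proof (Rabs_pos (zy - py)); lra).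
  assert (Herr1 : F [false] zx zy * e1 + F [true] zx zy * e2 <= M * Z1 * (A * h / 2)).
  { assert (R1 : F [false] zx zy * e1 <= Rabs (F [false] zx zy) * Rabs e1)
      by (rewrite <- Rabs_mult; apply Rle_abs).
    assert (R2 : F [true] zx zy * e2 <= Rabs (F [true] zx zy) * Rabs e2)
      by (rewrite <- Rabs_mult; apply Rle_abs).
    assert (Rabs (F [false] zx zy) * Rabs e1 <= M * Z1 * (a * h / 2))
      by (apply Rmult_le_compat; auto; apply Rabs_pos).
    assert (Rabs (F [true] zx zy) * Rabs e2 <= M * Z1 * (b * h / 2))
      by (apply Rmult_le_compat; auto; apply Rabs_pos).
    unfold A. lra. }
  assert (Herr2 : e1 * e1 + e2 * e2 <= A * A * (h * h) / 4).
  { rewrite <- (abs_sq e1), <- (abs_sq e2).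
    assert (Rabs e1 * Rabs e1 <= (a * h / 2) * (a * h / 2)) by (apply Rmult_le_compat; auto; apply Rabs_pos).
    assert (Rabs e2 * Rabs e2 <= (b * h / 2) * (b * h / 2)) by (apply Rmult_le_compat; auto; apply Rabs_pos).
    unfold A. assert (0 <= a * b * (h * h)) by (apply Rmult_le_pos; [nra|nra]). nra. }
  assert (Hfin : M * Z1 * (A * h / 2) + M * (A * A * (h * h) / 4) <= mu / 4 * (rho * (c * c) * (h * h) * Dd)).
  { assert (HZm : M * Z1 * (A * h / 2) <= M * (Dd * A * h + Cm * h) * (A * h / 2)).
    { assert (0 < A * h) by (apply Rmult_lt_0_compat; unfold A; lra).
      apply Rmult_le_compat_r; [lra|]. apply Rmult_le_compat_l; lra. }
    assert (HDd1 : 1 <= Dd) by lra.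
    assert (HA : 0 < A) by (unfold A; lra).
    replace (M * (Dd * A * h + Cm * h) * (A * h / 2) + M * (A * A * (h * h) / 4)) with
      ((M * A * A * Dd / 2 + M * A * Cm / 2 + M * A * A / 4) * (h * h)) by field.
    replace (mu / 4 * (rho * (c * c) * (h * h) * Dd)) with ((mu / 4 * rho * (c * c)) * Dd * (h * h)) by ring.
    assert (M * A * A * Dd / 2 + M * A * Cm / 2 + M * A * A / 4 <= mu / 4 * rho * (c * c) * Dd).
    { assert ((2 * M * A * A + M * A * Cm) * 1 <= (2 * M * A * A + M * A * Cm) * Dd).
      { apply Rmult_le_compat_l; auto. assert (0 <= M * A * Cm) by (apply Rmult_le_pos; nra). nra. }
      assert ((2 * M * A * A + M * A * Cm) * Dd <= mu / 4 * rho * (c * c) * Dd)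
        by (apply Rmult_le_compat_r; lra).
      assert (0 <= M * A * A) by nra. assert (0 <= M * A * Cm) by (apply Rmult_le_pos; nra).
      nra. }
    assert (0 <= h * h) by nra.
    assert ((M * A * A * Dd / 2 + M * A * Cm / 2 + M * A * A / 4) * (h * h) <= mu / 4 * rho * (c * c) * Dd * (h * h))
      by (apply Rmult_le_compat_r; auto).
    lra. }
  assert (mu / 4 * (rho * (c * c) * (h * h) * Dd) <= mu / 4 * (t * W)) by (apply Rmult_le_compat_l; lra).
  assert (M * (e1 * e1 + e2 * e2) <= M * (A * A * (h * h) / 4)) by (apply Rmult_le_compat_l; lra).
  lra.
Qed.

Theorem theorem1 (a b : R) (f : R -> R -> R) (F : list bool -> R -> R -> R)
  (px py : R) :
  0 < a -> 0 < b ->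
  C3_on_D_with a b f F ->
  inIntD a b px py ->
  local_min_on_D a b f px py ->
  hessian_pos_def F px py ->
  exists (U : R -> R -> Prop) (r : R),
    is_nbhd U px py /\ 0 < r /\
    exists N : nat, forall n : nat, (N <= n)%nat -> (1 <= n)%nat ->
      nondegenerate a b f n ->
      exists i j : nat,
        ((i <= n)%nat /\ (j <= n)%nat /\ U (gx a n i) (gy b n j) /\
          minimal_in_circle a b f n r i j) /\
        forall i' j' : nat,
          (i' <= n)%nat /\ (j' <= n)%nat /\ U (gx a n i') (gy b n j') /\
          minimal_in_circle a b f n r i' j' -> i' = i /\ j' = j.
Proof.
  intros Ha Hb HF Hp Hmin Hh.
  destruct (make_ctx a b f F px py HF Hp Hh) as [d [mu [M [Hd HC]]]].
  assert (HC' := HC). destruct HC' as [_ [HK [Hmu [HM _]]]].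
  destruct (grad0 a b f F px py HF Hp Hmin) as [Gx Gy].
  set (A := a + b). set (c := Rmin a b).
  assert (Hc0 : 0 < c) by (apply Rmin_pos; auto).
  assert (HA : 0 < A) by (unfold A; lra).
  set (Cm := 2 * M * (a + b) * (a + b) / mu + 1).
  assert (HCm : 1 <= Cm).
  { unfold Cm. assert (0 <= 2 * M * (a + b) * (a + b) / mu); [|lra].
    apply Rdiv_le_0_compat; [|lra]. assert (0 < a + b) by lra.
    apply Rmult_le_pos; [|lra]. apply Rmult_le_pos; lra. }
  assert (Hcc : 0 < mu / 4 * (c * c)) by (apply Rmult_lt_0_compat; nra).
  set (rho := (2 * M * A * A + M * A * Cm) / (mu / 4 * (c * c)) + 1).
  assert (Hrho0 : 0 < rho).
  { unfold rho. assert (0 <= (2 * M * A * A + M * A * Cm) / (mu / 4 * (c * c))); [|lra].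
    apply Rdiv_le_0_compat; auto. assert (0 <= M * A) by nra. nra. }
  assert (Hrho2 : 2 * M * (a + b) * (a + b) + M * (a + b) * Cm <= mu / 4 * rho * (Rmin a b * Rmin a b)).
  { fold A c. unfold rho.
    replace (mu / 4 * ((2 * M * A * A + M * A * Cm) / (mu / 4 * (c * c)) + 1) * (c * c))
      with ((2 * M * A * A + M * A * Cm) + mu / 4 * (c * c)) by (field; split; lra).
    lra. }
  set (r := rho + 1 + 4 * M * rho / mu).
  assert (H4 : 0 <= 4 * M * rho / mu) by (apply Rdiv_le_0_compat; [nra|lra]).
  assert (Hr1 : rho + 1 / 2 <= r) by (unfold r; lra).
  assert (Hr3 : 1 <= r) by (unfold r; lra).
  assert (Hr2 : 4 * M * rho <= mu * r).
  { unfold r. replace (mu * (rho + 1 + 4 * M * rho / mu)) with (mu * (rho + 1) + 4 * M * rho) by (field; lra).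
    nra. }
  exists (fun x y => Rabs (x - px) < d / 2 /\ Rabs (y - py) < d / 2), r.
  split; [exists (d / 2); split; [lra|auto]|]. split; [lra|].
  assert (Hd2 : 0 < d / 2) by lra.
  destruct (large_n (Cm + r * A + (rho + 1) * A + A) (d / 2) Hd2) as [N HN].
  exists N. intros n HnN Hn1 Hnd.
  specialize (HN n HnN Hn1).
  assert (Hn0 : 0 < INR n) by (apply lt_0_INR; lia).
  set (h := / INR n) in *.
  assert (Hh0 : 0 < h) by (apply Rinv_0_lt_compat; auto).
  unfold Rdiv in HN. fold h in HN.
  assert (0 <= r * A) by nra. assert (0 <= (rho + 1) * A) by nra.
  assert (L1 : Cm * h < d / 2) by nra.
  assert (L2 : (r * A + Cm) * h <= d) by nra.
  assert (L3 : A * h <= d) by nra.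
  assert (L4 : (rho + 1) * A * h <= d / 2) by nra.
  destruct (exist_min a b f F px py d mu M n Ha Hb HC Gx Gy Hn1 L3)
    as [i0 [j0 [Hi0 [Hj0 [Hsm [Hm0 Hcm]]]]]].
  fold Cm h in Hcm.
  exists i0, j0. split.
  - split; auto. split; auto. split.
    + pose proof (Rabs_pos (gx a n i0 - px)); pose proof (Rabs_pos (gy b n j0 - py)). split; lra.
    + intros l m [Hl [Hm Hr]]. apply Hm0; auto.
      assert (Hl' : Rabs (INR l - INR i0) <= r) by (eapply Rle_trans; [apply Rmax_l|apply Hr]).
      assert (Hm' : Rabs (INR m - INR j0) <= r) by (eapply Rle_trans; [apply Rmax_r|apply Hr]).
      pose proof (Rabs_pos (gx a n i0 - px)); pose proof (Rabs_pos (gy b n j0 - py)).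
      split.
      * replace (gx a n l - px) with ((gx a n l - gx a n i0) + (gx a n i0 - px)) by ring.
        eapply Rle_trans; [apply Rabs_triang|]. rewrite gx_diff. fold h.
        rewrite !Rabs_mult, (Rabs_pos_eq a), (Rabs_pos_eq h) by lra.
        assert (Rabs (INR l - INR i0) * a <= r * A).
        { apply Rmult_le_compat; auto; try apply Rabs_pos; unfold A; lra. }
        assert (Rabs (INR l - INR i0) * a * h <= r * A * h) by (apply Rmult_le_compat_r; lra).
        nra.
      * replace (gy b n m - py) with ((gy b n m - gy b n j0) + (gy b n j0 - py)) by ring.
        eapply Rle_trans; [apply Rabs_triang|]. rewrite gy_diff. fold h.
        rewrite !Rabs_mult, (Rabs_pos_eq b), (Rabs_pos_eq h) by lra.
        assert (Rabs (INR m - INR j0) * b <= r * A).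
        { apply Rmult_le_compat; auto; try apply Rabs_pos; unfold A; lra. }
        assert (Rabs (INR m - INR j0) * b * h <= r * A * h) by (apply Rmult_le_compat_r; lra).
        nra.
  - intros i j [Hi [Hj [[Hx Hy] Hmc]]].
    apply (uniq_part a b f F px py d mu M n i j i0 j0 rho r Cm); auto; lra.
Qed.
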